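(* Let $p$ be an odd prime, $q=p^m$, and let $k$ be an integer with $0<k<m$. Let $b,c\in\mathbb F_{q^2}^*$ with $\mathrm N(b)=\mathrm N(c)$, let $c_0\in\mathbb F_{q^2}$, let $\ell(x)=(bx^q+cx)^{p^k}-c_0(bx^q+cx)$ and $f(x)=x^{q+1}+\ell(x^2)$. Then $f$ is a planar function on $\mathbb F_{q^2}$ if and only if all of the following hold: (i) $(b^{-1}c)^{\frac{q+1}2}=-1$; (ii) $\omega^{q-1}\ne b^qc^{-1}$ for every $\omega\in\mathbb F_{q^2}^*$ such that $\omega^{p^k-1}=c_0$; (iii) $\omega^{q-1}\ne b^qc^{-1}$ for every $\omega\in\mathbb F_{q^2}^*$ such that $((b^{-1}c^q)^{p^k}-1)\omega^{p^k-1}=b^{-1}c^qc_0^q-c_0$. In particular, if $d=\gcd(p^k-1,q^2-1)$ divides $q-1$ (equivalently, $\gcd(k,2m)$ divides $m$), then conditions (ii) and (iii) are respectively equivalent to (ii') $c_0^{(q-1)/d}\ne(b^qc^{-1})^{(p^k-1)/d}$, and (iii') $(b^{-1}c^qc_0^q-c_0)^{(q-1)/d}\ne((b^{-1}c^q)^{p^k}-1)^{(q-1)/d}(b^qc^{-1})^{(p^k-1)/d}$.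
   Context: $\mathrm N$ denotes the norm from $\mathbb F_{q^2}$ to $\mathbb F_q$, $\mathrm N(u)=u^{q+1}$. A function $f$ on $\mathbb F_{q^n}$ is planar if for every $c\in\mathbb F_{q^n}^*$ the map $x\mapsto f(x+c)-f(x)$ is a permutation of $\mathbb F_{q^n}$. *)

(* Defs.v *)
From mathcomp Require Import all_boot all_order all_algebra all_field.
Set Implicit Arguments. Unset Strict Implicit. Unset Printing Implicit Defensive.
Import GRing.Theory.
Local Open Scope ring_scope.

Definition normF (F : finFieldType) (q : nat) (u : F) : F := u ^+ q.+1.

Definition planar (F : finFieldType) (f : F -> F) : Prop :=
  forall c : F, c != 0 -> bijective (fun x => f (x + c) - f x).

Definition ell (F : finFieldType) (p m k : nat) (b c c0 : F) (x : F) : F :=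
  (b * x ^+ (p ^ m) + c * x) ^+ (p ^ k) - c0 * (b * x ^+ (p ^ m) + c * x).

Definition fpoly (F : finFieldType) (p m k : nat) (b c c0 : F) (x : F) : F :=
  x ^+ (p ^ m).+1 + ell p m k b c c0 (x ^+ 2).

(* Main.v *)
Require Import Defs.
From mathcomp Require Import all_boot all_order all_algebra all_field.
From mathcomp Require Import all_fingroup all_solvable.
From mathcomp Require Import ring zify.
Import GRing.Theory.
Local Open Scope ring_scope.
Set Implicit Arguments. Unset Strict Implicit.

Lemma prim_exists (F : finFieldType) :
  {g : F | (#|F|.-1).-primitive_root g}.
Proof.
have hgt : (0 < #|F|.-1)%N by case: #|F| (finNzRing_gt1 F) => [|[|n]].
have hall : all (#|F|.-1).-unity_root (enum (predC1 (0:F))).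
  apply/allP => x; rewrite mem_enum /= => hx.
  rewrite unity_rootE; apply/eqP.
  have := expf_card x; rewrite -(ltn_predK (finNzRing_gt1 F)) exprS.
  by move/(canRL (mulKf hx)); rewrite mulVf.
have := has_prim_root hgt hall (enum_uniq _).
rewrite -cardE cardC1 leqnn => /(_ isT) /hasP => H.
by apply: sigW; case: H => g _ hg; exists g.
Qed.

Lemma powP (F : finFieldType) (g : F) (n e : nat) (x : F) :
  (#|F|.-1).-primitive_root g ->
  (0 < n)%N -> (0 < e)%N -> (n %| #|F|.-1)%N -> x ^+ n = 1 ->
  x ^+ (n %/ gcdn e n) = 1 -> exists z : F, z ^+ n = 1 /\ z ^+ e = x.
Proof.
move=> hg hn he hnN hx hxd.
set N := #|F|.-1 in hg hnN.
set r := (N %/ n)%N.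
have hN : N = (r * n)%N by rewrite /r divnK.
have hxN : x ^+ N = 1 by rewrite hN mulnC exprM hx expr1n.
case: (prim_rootP hg hxN) => [[i hi] /= hxi]; subst x.
move: hxd; rewrite -exprM /= => /eqP; rewrite -(prim_order_dvd hg) => hdv.
set d := gcdn e n in hdv *.
have hdn : (d %| n)%N by apply: dvdn_gcdr.
have hd0 : (0 < d)%N by rewrite gcdn_gt0 he.
have hnd : n = (d * (n %/ d))%N by rewrite mulnC divnK.
have hnd0 : (0 < n %/ d)%N by rewrite divn_gt0 // dvdn_leq.
have : ((r * d) %| i)%N.
  rewrite -(dvdn_pmul2r hnd0) -mulnA -hnd -hN //.
case/dvdnP => j hj.
case: (egcdnP n he) => km kn hkm _.
exists (g ^+ (r * km * j)); split.
  rewrite -exprM.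
  have -> : (r * km * j * n = N * (km * j))%N by rewrite hN; nia.
  by rewrite exprM (prim_expr_order hg) expr1n.
rewrite -exprM hj.
have -> : (r * km * j * e = N * (j * kn) + j * (r * d))%N.
  rewrite hN /d; nia.
by rewrite exprD exprM (prim_expr_order hg) expr1n mul1r.
Qed.

Lemma xQ (F : finFieldType) (q : nat) (hQ : #|F| = (q ^ 2)%N) (x : F) :
  x ^+ (q ^ 2) = x.
Proof. by rewrite -hQ expf_card. Qed.

Lemma xqq (F : finFieldType) (q : nat) (hQ : #|F| = (q ^ 2)%N) (x : F) :
  (x ^+ q) ^+ q = x.
Proof. by rewrite -exprM mulnn -hQ expf_card. Qed.

Lemma xN1 (F : finFieldType) (q : nat) (hQ : #|F| = (q ^ 2)%N) (x : F) :
  x != 0 -> x ^+ (q ^ 2 - 1) = 1.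
Proof.
move=> hx; have := xQ hQ x.
have hq : (0 < q ^ 2)%N by rewrite -hQ; case: #|F| (finNzRing_gt1 F).
rewrite -{1}(subnK hq) addn1 exprS => /(canRL (mulKf hx)); by rewrite mulVf.
Qed.

Lemma frobB (F : finFieldType) (q : nat)
  (hfq : forall x y : F, (x + y) ^+ q = x ^+ q + y ^+ q) (x y : F) :
  (x - y) ^+ q = x ^+ q - y ^+ q.
Proof. by apply/eqP; rewrite eq_sym subr_eq -hfq subrK. Qed.

Lemma frob0 (F : finFieldType) (q : nat)
  (hfq : forall x y : F, (x + y) ^+ q = x ^+ q + y ^+ q) :
  (0 : F) ^+ q = 0.
Proof. by have := hfq 0 0; rewrite addr0 => /esym/eqP; rewrite -subr_eq0 addrK => /eqP. Qed.

Lemma frobN (F : finFieldType) (q : nat)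
  (hfq : forall x y : F, (x + y) ^+ q = x ^+ q + y ^+ q) (x : F) :
  (- x) ^+ q = - x ^+ q.
Proof. by have := frobB hfq 0 x; rewrite sub0r frob0 // sub0r. Qed.

Lemma frobn (F : finFieldType) (q : nat)
  (hfq : forall x y : F, (x + y) ^+ q = x ^+ q + y ^+ q) (n : nat) :
  (n%:R : F) ^+ q = n%:R.
Proof.
elim: n => [|n IH]; first by rewrite frob0.
have hq1 : (1 : F) ^+ q = 1 by rewrite expr1n.
by rewrite -addn1 natrD hfq IH hq1.
Qed.

Lemma E1 (F : finFieldType) (q : nat) (hQ : #|F| = (q ^ 2)%N) (hq : (1 < q)%N)
  (t : F) : t ^+ q.+1 = 1 -> exists w : F, w != 0 /\ w ^+ (q - 1) = t.
Proof.
move=> ht.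
have [g hg] := prim_exists F.
have hN : #|F|.-1 = ((q - 1) * q.+1)%N by rewrite hQ; nia.
have ht0 : t != 0.
  by apply/eqP => ht0; move: ht; rewrite ht0 expr0n /= => /eqP; rewrite eq_sym oner_eq0.
have [] := @powP F g (#|F|.-1) (q - 1) t hg.
- by rewrite hN; nia.
- by lia.
- by [].
- by rewrite hQ -subn1 xN1.
- rewrite hN gcdnMr mulKn ?ht //; lia.
move=> w [_ hw]; exists w; split => //.
apply/eqP => hw0; move: ht0; rewrite -hw hw0 expr0n.
have -> : (q - 1)%N = (q - 2).+1 by lia.
by rewrite /= eqxx.
Qed.

Lemma E2 (F : finFieldType) (q : nat) (hQ : #|F| = (q ^ 2)%N) (hq : (1 < q)%N)
  (hqo : odd q) (z : F) : z ^+ ((q - 1) * (q.+1 %/ 2)) = 1 -> exists a : F, a ^+ 2 = z.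
Proof.
move=> hz.
have [g hg] := prim_exists F.
have hq2 : q.+1 = (2 * (q.+1 %/ 2))%N by rewrite mulnC divnK // dvdn2 /= hqo.
have hN : #|F|.-1 = (2 * ((q - 1) * (q.+1 %/ 2)))%N by rewrite hQ; nia.
have hz0 : z != 0.
  apply/eqP => hz0; move: hz; rewrite hz0 expr0n.
  have -> : ((q - 1) * (q.+1 %/ 2))%N = (((q - 1) * (q.+1 %/ 2)).-1).+1 by nia.
  by move=> /= /eqP; rewrite eq_sym oner_eq0.
have [] := @powP F g (#|F|.-1) 2 z hg.
- by rewrite hN; nia.
- by [].
- by [].
- by rewrite hQ -subn1 xN1.
- by rewrite hN gcdnMr mulKn.
move=> a [_ ha]; by exists a.
Qed.

Definition SF (F : finFieldType) (q : nat) := [set x : F | x ^+ q == x].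

Lemma card_S (F : finFieldType) (q : nat) (hq : (1 < q)%N) : (#|SF F q| <= q)%N.
Proof.
set P : {poly F} := 'X^q - 'X.
have hsz : size P = q.+1.
  by rewrite /P size_polyDl size_polyXn // size_polyN size_polyX ltnS.
have hP0 : P != 0 by rewrite -size_poly_eq0 hsz.
have := @max_poly_roots F P (enum (SF F q)) hP0.
rewrite cardE hsz ltnS; apply.
- apply/allP => x; rewrite mem_enum inE => hx.
  by rewrite /root /P !hornerE (eqP hx) subrr.
- exact: enum_uniq.
Qed.

Lemma card_Sq (F : finFieldType) (q : nat) (hQ : #|F| = (q ^ 2)%N) (hq : (1 < q)%N)
  (hqo : odd q) : (q.+1 %/ 2 <= #|[set y ^+ 2 | y in SF F q]|)%N.
Proof.
have [g hg] := prim_exists F.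
set h := q./2.
have hqh : q = (2 * h).+1 by rewrite /h -[q in LHS](odd_double_half q) hqo mul2n.
have hN : #|F|.-1 = (4 * h * (h + 1))%N by rewrite hQ hqh; nia.
rewrite hN in hg.
have hg0 : g != 0.
  apply/eqP => g0; have := prim_expr_order hg; rewrite g0 expr0n.
  have -> : (4 * h * (h + 1))%N = (4 * h * (h + 1)).-1.+1 by nia.
  by move/eqP; rewrite eq_sym oner_eq0.
set Sq := [set y ^+ 2 | y in SF F q].
pose f (j : 'I_h) := g ^+ (4 * (h + 1) * j).
have finj : injective f.
  move=> i j /eqP; rewrite /f (eq_prim_root_expr hg) !modn_small.
  - by move=> /eqP hij; apply: val_inj => /=; nia.
  - by have := ltn_ord i; have := ltn_ord j; nia.
  - by have := ltn_ord i; have := ltn_ord j; nia.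
have hsub : [set f j | j : 'I_h] \subset Sq :\ 0.
  apply/subsetP => _ /imsetP [j _ ->]; rewrite !inE /f expf_neq0 //=.
  apply/imsetP; exists (g ^+ (2 * (h + 1) * j)); last by rewrite -exprM; congr (_ ^+ _); nia.
  rewrite inE -exprM; apply/eqP.
  have -> : (2 * (h + 1) * j * q = 2 * (h + 1) * j + 4 * h * (h + 1) * j)%N by rewrite hqh; nia.
  by rewrite exprD (exprM g (4 * h * (h + 1))) (prim_expr_order hg) expr1n mulr1.
have := subset_leq_card hsub; rewrite card_imset // card_ord => hle.
have h0 : (0 : F) \in Sq.
  apply/imsetP; exists 0; last by rewrite expr0n.
  by rewrite inE expr0n hqh.
rewrite (cardsD1 0) h0.
have -> : (q.+1 %/ 2 = h.+1)%N.
  have -> : q.+1 = (h.+1 * 2)%N by lia.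
  by rewrite mulnK.
by [].
Qed.

Lemma SF_sq (F : finFieldType) (q : nat)
  (hfq : forall x y : F, (x + y) ^+ q = x ^+ q + y ^+ q) (c a y : F) :
  c \in SF F q -> a \in SF F q -> y \in SF F q -> c + a * y ^+ 2 \in SF F q.
Proof.
rewrite !inE => /eqP hc /eqP ha /eqP hy.
by rewrite hfq exprMn exprAC hc ha hy.
Qed.

Lemma pigeon (F : finFieldType) (q : nat) (hQ : #|F| = (q ^ 2)%N) (hq : (1 < q)%N)
  (hqo : odd q) (hfq : forall x y : F, (x + y) ^+ q = x ^+ q + y ^+ q)
  (c1 a1 c2 a2 : F) : a1 != 0 -> a2 != 0 ->
  c1 \in SF F q -> a1 \in SF F q -> c2 \in SF F q -> a2 \in SF F q ->
  exists s r, [/\ s \in SF F q, r \in SF F q & c1 + a1 * s ^+ 2 = c2 + a2 * r ^+ 2].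
Proof.
move=> ha1 ha2 hc1 hSa1 hc2 hSa2.
set Sq := [set y ^+ 2 | y in SF F q].
set A := [set c1 + a1 * z | z in Sq].
set B := [set c2 + a2 * z | z in Sq].
have hA : #|A| = #|Sq| by apply: card_imset => x y /addrI /(mulfI ha1).
have hB : #|B| = #|Sq| by apply: card_imset => x y /addrI /(mulfI ha2).
have hsub : A :|: B \subset SF F q.
  apply/subsetP => x; rewrite inE => /orP [] /imsetP [z /imsetP [y hy ->] ->];
  exact: SF_sq.
have hS := card_S F hq.
have hSq := card_Sq hQ hq hqo.
case: (set_0Vmem (A :&: B)) => [h0|[x]].
  have := subset_leq_card hsub; rewrite cardsU h0 cards0 subn0 hA hB.
  have : (q.+1 <= 2 * (q.+1 %/ 2))%N by rewrite mulnC divnK // dvdn2 /= hqo.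
  have hSq2 : (q.+1 %/ 2 <= #|Sq|)%N := hSq.
  move=> hh1 hh2; exfalso; have := leq_trans hh2 hS; move: hh1 hSq2; lia.
rewrite inE => /andP [/imsetP [z1 /imsetP [s hs ->] ->] /imsetP [z2 /imsetP [r hr ->] hx]].
by exists s, r; split.
Qed.

Definition Mf (F : finFieldType) (q : nat) (b c u : F) := b * u ^+ q + c * u.
Definition Lf (F : finFieldType) (q r : nat) (b c c0 u : F) :=
  (Mf q b c u) ^+ r - c0 * Mf q b c u.
Definition fF (F : finFieldType) (q r : nat) (b c c0 x : F) :=
  x ^+ q.+1 + Lf q r b c c0 (x ^+ 2).
Definition DD (F : finFieldType) (q r : nat) (b c c0 a x : F) :=
  a * x ^+ q + a ^+ q * x + Lf q r b c c0 (x * a *+ 2).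

Lemma MD (F : finFieldType) (q : nat)
  (hfq : forall x y : F, (x + y) ^+ q = x ^+ q + y ^+ q) (b c u v : F) :
  Mf q b c (u + v) = Mf q b c u + Mf q b c v.
Proof. rewrite /Mf hfq; ring. Qed.

Lemma LD (F : finFieldType) (q r : nat)
  (hfq : forall x y : F, (x + y) ^+ q = x ^+ q + y ^+ q)
  (hfr : forall x y : F, (x + y) ^+ r = x ^+ r + y ^+ r) (b c c0 u v : F) :
  Lf q r b c c0 (u + v) = Lf q r b c c0 u + Lf q r b c c0 v.
Proof. rewrite /Lf MD // hfr; ring. Qed.

Lemma Ddiff (F : finFieldType) (q r : nat)
  (hfq : forall x y : F, (x + y) ^+ q = x ^+ q + y ^+ q)
  (hfr : forall x y : F, (x + y) ^+ r = x ^+ r + y ^+ r) (b c c0 a x : F) :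
  fF q r b c c0 (x + a) - fF q r b c c0 x = fF q r b c c0 a + DD q r b c c0 a x.
Proof. rewrite /fF /DD sqrrD !LD // !exprS hfq; ring. Qed.

Lemma DDadd (F : finFieldType) (q r : nat)
  (hfq : forall x y : F, (x + y) ^+ q = x ^+ q + y ^+ q)
  (hfr : forall x y : F, (x + y) ^+ r = x ^+ r + y ^+ r) (b c c0 a x y : F) :
  DD q r b c c0 a (x + y) = DD q r b c c0 a x + DD q r b c c0 a y.
Proof. rewrite /DD hfq mulrDl mulrnDl LD //; ring. Qed.

Lemma DD0 (F : finFieldType) (q r : nat)
  (hfq : forall x y : F, (x + y) ^+ q = x ^+ q + y ^+ q)
  (hfr : forall x y : F, (x + y) ^+ r = x ^+ r + y ^+ r) (b c c0 a : F) :
  DD q r b c c0 a 0 = 0.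
Proof.
have := DDadd hfq hfr b c c0 a 0 0; rewrite addr0 => /esym/eqP.
by rewrite -subr_eq0 addrK => /eqP.
Qed.

Lemma planar_iff (F : finFieldType) (q r : nat)
  (hfq : forall x y : F, (x + y) ^+ q = x ^+ q + y ^+ q)
  (hfr : forall x y : F, (x + y) ^+ r = x ^+ r + y ^+ r) (b c c0 : F) :
  planar (fF q r b c c0) <->
  (forall a x : F, a != 0 -> x != 0 -> DD q r b c c0 a x != 0).
Proof.
split.
- move=> hP a x ha hx; apply/eqP => hD.
  have [g hg _] := hP a ha.
  have : fF q r b c c0 (x + a) - fF q r b c c0 x = fF q r b c c0 (0 + a) - fF q r b c c0 0.
    by rewrite !Ddiff // hD DD0.
  move/(congr1 g); rewrite !hg => hx0; by rewrite hx0 eqxx in hx.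
- move=> hD a ha; apply: injF_bij => x y /=.
  rewrite !Ddiff // => /addrI /eqP; rewrite -subr_eq0 => hxy.
  apply/eqP; rewrite -subr_eq0; apply: contraTT hxy => hne.
  have := DDadd hfq hfr b c c0 a (x - y) y; rewrite subrK => ->.
  by rewrite addrK; apply: hD.
Qed.

Lemma xpow (F : finFieldType) (n : nat) (x : F) : (0 < n)%N -> x ^+ n = x ^+ (n - 1) * x.
Proof. by move=> hn; rewrite -exprSr subn1 prednK. Qed.

Lemma two_neq0 (F : finFieldType) (x y : F) : (2%:R : F) != 0 -> x != 0 -> y != 0 ->
  x * y *+ 2 != 0.
Proof. by move=> h2 hx hy; rewrite -mulr_natr !mulf_neq0. Qed.

Lemma hcq_eq (F : finFieldType) (q : nat) (b c : F) (hc : c != 0)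
  (hN : b ^+ q.+1 = c ^+ q.+1) : c ^+ q = b * b ^+ q / c.
Proof. by move: hN; rewrite !exprS => ->; rewrite mulrAC divff // mul1r. Qed.

Lemma t_eq (F : finFieldType) (q : nat) (b c : F) (hb : b != 0) (hc : c != 0)
  (hN : b ^+ q.+1 = c ^+ q.+1) : b^-1 * c ^+ q = b ^+ q / c.
Proof. by rewrite (hcq_eq hc hN); field; rewrite hb hc. Qed.

Lemma t_q1 (F : finFieldType) (q : nat) (hQ : #|F| = (q ^ 2)%N) (b c : F) (hb : b != 0) (hc : c != 0)
  (hN : b ^+ q.+1 = c ^+ q.+1) : (b^-1 * c ^+ q) ^+ q.+1 = 1.
Proof.
rewrite exprS exprMn exprVn xqq // (hcq_eq hc hN).
by field; rewrite hb hc /= expf_neq0.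
Qed.

Lemma Mq (F : finFieldType) (q : nat) (hQ : #|F| = (q ^ 2)%N)
  (hfq : forall x y : F, (x + y) ^+ q = x ^+ q + y ^+ q) (b c : F) (hb : b != 0) (hc : c != 0)
  (hN : b ^+ q.+1 = c ^+ q.+1) (u : F) :
  (Mf q b c u) ^+ q = b^-1 * c ^+ q * Mf q b c u.
Proof.
rewrite /Mf hfq !exprMn xqq // (hcq_eq hc hN).
by field; rewrite hb hc.
Qed.

Lemma frobL (F : finFieldType) (q r : nat) (hQ : #|F| = (q ^ 2)%N)
  (hfq : forall x y : F, (x + y) ^+ q = x ^+ q + y ^+ q) (a x : F) :
  (a * x ^+ q + a ^+ q * x) ^+ q = a * x ^+ q + a ^+ q * x.
Proof. by rewrite hfq !exprMn !xqq // addrC. Qed.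

Lemma planar_dir (F : finFieldType) (q r : nat) (hQ : #|F| = (q ^ 2)%N)
  (hq : (1 < q)%N) (hqo : odd q) (hr : (0 < r)%N)
  (hfq : forall x y : F, (x + y) ^+ q = x ^+ q + y ^+ q)
  (hfr : forall x y : F, (x + y) ^+ r = x ^+ r + y ^+ r)
  (h2 : (2%:R : F) != 0)
  (b c c0 : F) (hb : b != 0) (hc : c != 0) (hN : b ^+ q.+1 = c ^+ q.+1) :
  (b^-1 * c) ^+ ((q + 1) %/ 2) = -1 ->
  (forall w : F, w != 0 ->
     ((b^-1 * c ^+ q) ^+ r - 1) * w ^+ (r - 1) = b^-1 * c ^+ q * c0 ^+ q - c0 ->
     w ^+ (q - 1) != b ^+ q / c) ->
  forall a x : F, a != 0 -> x != 0 -> DD q r b c c0 a x != 0.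
Proof.
move=> hi hiii a x ha hx; apply/eqP => hD.
set u := x * a *+ 2.
have hu : u != 0 by apply: two_neq0.
set v := Mf q b c u.
set t := b^-1 * c ^+ q.
have hl : Lf q r b c c0 u = - (a * x ^+ q + a ^+ q * x).
  by apply/eqP; rewrite -addr_eq0 addrC; exact/eqP.
have hlq : (Lf q r b c c0 u) ^+ q = Lf q r b c c0 u.
  by rewrite hl frobN // frobL.
have hq0 : (0 < q)%N by lia.
case: (eqVneq v 0) => hv.
- have hl0 : Lf q r b c c0 u = 0.
    rewrite /Lf -/v hv mulr0 subr0 -(prednK hr) exprS mul0r; reflexivity.
  have hax : a * x ^+ q + a ^+ q * x = 0 by apply/eqP; rewrite -oppr_eq0 -hl hl0.
  set al := x ^+ (q - 1); set be := a ^+ (q - 1).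
  have hxq : x ^+ q = al * x by rewrite xpow.
  have haq : a ^+ q = be * a by rewrite xpow.
  have hab : al = - be.
    move: hax; rewrite hxq haq => /eqP.
    have -> : a * (al * x) + be * a * x = (al + be) * (a * x) by ring.
    rewrite mulf_eq0 mulf_eq0 (negbTE ha) (negbTE hx) /= orbF addr_eq0 => /eqP //.
  have huq : u ^+ q = al * be * u.
    rewrite /u -mulr_natr !exprMn frobn // hxq haq; ring.
  have hcb : c = b * al ^+ 2.
    move: hv; rewrite /v /Mf huq => /eqP.
    have -> : b * (al * be * u) + c * u = (b * al * be + c) * u by ring.
    rewrite mulf_eq0 (negbTE hu) orbF addr_eq0 => /eqP h.
    have hbe : be = - al by rewrite hab opprK.
    by rewrite -[c]opprK -h hbe; ring.
  move: hi; rewrite hcb mulrA mulVf // mul1r -exprM.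
  have -> : (2 * ((q + 1) %/ 2))%N = (q + 1)%N by rewrite mulnC divnK // dvdn2 addn1 /= hqo.
  rewrite /al -exprM.
  have -> : ((q - 1) * (q + 1))%N = (q ^ 2 - 1)%N by nia.
  rewrite xN1 // => /eqP; rewrite -subr_eq0 opprK.
  by rewrite (negbTE h2).
- have hvq : v ^+ q = t * v by rewrite /v Mq.
  have hvq1 : v ^+ (q - 1) = t.
    by apply: (mulIf hv); rewrite -xpow.
  suff hAB : (t ^+ r - 1) * v ^+ (r - 1) = t * c0 ^+ q - c0.
    by move: (hiii v hv hAB); rewrite hvq1 /t t_eq // eqxx.
  apply: (mulIf hv).
  rewrite -mulrA -xpow //.
  move: hlq; rewrite /Lf -/v frobB // exprMn exprAC hvq exprMn => /eqP.
  rewrite -/t -subr_eq0 => /eqP h0.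
  rewrite -/t; apply/eqP; rewrite -subr_eq0; apply/eqP; rewrite -h0; ring.
Qed.


Lemma negq1 (F : finFieldType) (q : nat) (hqo : odd q) (x : F) :
  (- x) ^+ q.+1 = x ^+ q.+1.
Proof. by rewrite exprNn -signr_odd /= hqo /= expr0 mul1r. Qed.

Lemma kernel_elem (F : finFieldType) (q : nat) (hQ : #|F| = (q ^ 2)%N)
  (hq : (1 < q)%N) (hqo : odd q)
  (b c : F) (hb : b != 0) (hc : c != 0) (hN : b ^+ q.+1 = c ^+ q.+1) :
  exists u0 : F, [/\ u0 != 0, u0 ^+ (q - 1) = - (b^-1 * c) & Mf q b c u0 = 0].
Proof.
have [u0 [hu0 hu0q]] : exists w : F, w != 0 /\ w ^+ (q - 1) = - (b^-1 * c).
  apply: E1 => //; rewrite negq1 // exprMn exprVn -hN mulVf //.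
  by rewrite expf_neq0.
exists u0; split => //.
rewrite /Mf xpow; last by lia.
rewrite hu0q; field; exact: hb.
Qed.

Lemma lam_elem (F : finFieldType) (q : nat) (hQ : #|F| = (q ^ 2)%N)
  (hq : (1 < q)%N) (hqo : odd q) :
  exists l : F, [/\ l != 0, l ^+ (q - 1) = -1 & l ^+ q = - l].
Proof.
have [l [hl hlq]] : exists w : F, w != 0 /\ w ^+ (q - 1) = -1.
  by apply: E1 => //; rewrite negq1 // expr1n.
exists l; split => //; rewrite xpow; last by lia.
by rewrite hlq mulN1r.
Qed.

Lemma two_q1 (F : finFieldType) (q : nat) (hq : (1 < q)%N)
  (hfq : forall x y : F, (x + y) ^+ q = x ^+ q + y ^+ q) (h2 : (2%:R : F) != 0) :
  (2%:R : F) ^+ (q - 1) = 1.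
Proof.
apply: (mulIf h2); rewrite -xpow; last by lia.
by rewrite frobn // mul1r.
Qed.

Lemma nonplanar_notI (F : finFieldType) (q r : nat) (hQ : #|F| = (q ^ 2)%N)
  (hq : (1 < q)%N) (hqo : odd q) (hr : (0 < r)%N)
  (hfq : forall x y : F, (x + y) ^+ q = x ^+ q + y ^+ q)
  (hfr : forall x y : F, (x + y) ^+ r = x ^+ r + y ^+ r)
  (h2 : (2%:R : F) != 0)
  (b c c0 : F) (hb : b != 0) (hc : c != 0) (hN : b ^+ q.+1 = c ^+ q.+1) :
  (b^-1 * c) ^+ ((q + 1) %/ 2) != -1 ->
  exists a x : F, [/\ a != 0, x != 0 & DD q r b c c0 a x = 0].
Proof.
move=> hi.
set s := b^-1 * c.
have hs1 : s ^+ q.+1 = 1 by rewrite /s exprMn exprVn -hN mulVf // expf_neq0.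
set h := ((q + 1) %/ 2)%N.
have hd : (2 %| q + 1)%N by rewrite dvdn2 addn1 /= hqo.
have hqh : q.+1 = (2 * h)%N by rewrite /h mulnC divnK // addn1.
have hsh : s ^+ h = 1.
  have : (s ^+ h) ^+ 2 == 1 by rewrite -exprM mulnC -hqh hs1.
  by rewrite sqrf_eq1 (negbTE hi) orbF => /eqP.
have [u0 [hu0 hu0q hMu0]] := kernel_elem hQ hq hqo hb hc hN.
have [l [hl hlq1 hlq]] := lam_elem hQ hq hqo.
set z := u0 / (l * 2%:R).
have hz : z ^+ ((q - 1) * h) = 1.
  rewrite exprM /z expr_div_n exprMn hu0q.
  rewrite exprMn hlq1 two_q1 // mulr1 invrN invr1 -exprMn mulrN1 opprK.
  exact: hsh.
have [a ha] : exists a : F, a ^+ 2 = z.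
  apply: (E2 hQ hq hqo); have -> : (q.+1 %/ 2 = h)%N by rewrite /h addn1.
  exact: hz.
have hz0 : z != 0 by rewrite /z mulf_neq0 // invr_neq0 // mulf_neq0.
have ha0 : a != 0 by apply: contraNneq hz0 => ha0; rewrite -ha ha0 expr0n.
exists a, (l * a); split => //; first by rewrite mulf_neq0.
rewrite /DD.
have -> : l * a * a *+ 2 = u0.
  rewrite -mulrA -expr2 ha /z -mulr_natr; field.
  by rewrite hl h2.
rewrite /Lf hMu0 mulr0 subr0 -(prednK hr) exprS mul0r addr0.
rewrite exprMn hlq; ring.
Qed.

Lemma Mf_scale (F : finFieldType) (q : nat) (b c k u : F) :
  k ^+ q = k -> Mf q b c (k * u) = k * Mf q b c u.
Proof. by move=> hk; rewrite /Mf exprMn hk; ring. Qed.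

Lemma nonplanar_notIII (F : finFieldType) (q r : nat) (hQ : #|F| = (q ^ 2)%N)
  (hq : (1 < q)%N) (hqo : odd q) (hr : (0 < r)%N)
  (hfq : forall x y : F, (x + y) ^+ q = x ^+ q + y ^+ q)
  (hfr : forall x y : F, (x + y) ^+ r = x ^+ r + y ^+ r)
  (h2 : (2%:R : F) != 0)
  (b c c0 : F) (hb : b != 0) (hc : c != 0) (hN : b ^+ q.+1 = c ^+ q.+1) (v : F) :
  v != 0 -> v ^+ (q - 1) = b ^+ q / c ->
  ((b^-1 * c ^+ q) ^+ r - 1) * v ^+ (r - 1) = b^-1 * c ^+ q * c0 ^+ q - c0 ->
  exists a x : F, [/\ a != 0, x != 0 & DD q r b c c0 a x = 0].
Proof.
move=> hv hvq1 hE.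
have hq0 : (0 < q)%N by lia.
set t := b^-1 * c ^+ q in hE.
have ht : t = b ^+ q / c by rewrite /t t_eq.
rewrite -ht in hvq1.
have hvq : v ^+ q = t * v by rewrite xpow // hvq1.
set l := v ^+ r - c0 * v.
have hlq : l ^+ q = l.
  have E : (t ^+ r - 1) * v ^+ r = (t * c0 ^+ q - c0) * v.
    by rewrite xpow // mulrA hE.
  rewrite /l frobB // exprMn exprAC hvq exprMn.
  apply/eqP; rewrite -subr_eq0; apply/eqP.
  transitivity ((t ^+ r - 1) * v ^+ r - (t * c0 ^+ q - c0) * v); first by ring.
  by rewrite E subrr.
have [u0 [hu0 hu0q hMu0]] := kernel_elem hQ hq hqo hb hc hN.
have [th [hth hthq1 hthq]] := lam_elem hQ hq hqo.
have hcq0 : c ^+ q != 0 by rewrite expf_neq0.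
set u1 := v / (c * 2%:R).
have hMu1 : Mf q b c u1 = v.
  rewrite /Mf /u1 expr_div_n hvq exprMn frobn // /t.
  by field; rewrite hb hc hcq0 h2.
set y0 := u1 / 2%:R.
set z0 := u0 / 2%:R.
have hz0 : z0 != 0 by rewrite /z0 mulf_neq0 // invr_neq0.
have hNz0 : z0 ^+ q * z0 != 0 by rewrite mulf_neq0 // expf_neq0.
set T := y0 * z0 ^+ q + y0 ^+ q * z0.
set hh := T / (2%:R * (z0 ^+ q * z0)).
have hTq : T ^+ q = T by rewrite /T hfq !exprMn !xqq // addrC.
have hhq : hh ^+ q = hh.
  have key : forall Z : F, (2%:R * (Z ^+ q * Z)) ^+ q = 2%:R * (Z ^+ q * Z).
    by move=> Z; rewrite exprMn frobn // exprMn xqq // [Z * _]mulrC.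
  by rewrite /hh expr_div_n hTq key.
set y1 := y0 - hh * z0.
have hline : forall s : F, s ^+ q = s ->
    (y1 + s * z0) ^+ q * (y1 + s * z0) = y1 ^+ q * y1 + (z0 ^+ q * z0) * s ^+ 2.
  move=> s hs.
  rewrite /y1 hfq frobB // (exprMn q hh z0) (exprMn q s z0) hhq hs.
  have hT : y0 * z0 ^+ q + y0 ^+ q * z0 = hh * (2%:R * (z0 ^+ q * z0)).
    by rewrite /hh mulfVK // mulf_neq0.
  apply/eqP; rewrite -subr_eq0; apply/eqP.
  transitivity (s * (y0 * z0 ^+ q + y0 ^+ q * z0 - hh * (2%:R * (z0 ^+ q * z0)))).
    by ring.
  by rewrite hT subrr mulr0.
have hl2 : (l / 2%:R) ^+ q = l / 2%:R by rewrite expr_div_n hlq frobn.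
have hw : forall s : F, s ^+ q = s ->
    (s * th - l / 2%:R) ^+ q * (s * th - l / 2%:R) = (l / 2%:R) ^+ 2 + (- th ^+ 2) * s ^+ 2.
  move=> s hs; rewrite frobB // exprMn hs hthq hl2; ring.
have hSF : forall x : F, (x ^+ q == x) = (x \in SF F q) by move=> x; rewrite inE.
have [s [rr [hs hrr heq]]] : exists s rr, [/\ s \in SF F q, rr \in SF F q &
    y1 ^+ q * y1 + (z0 ^+ q * z0) * s ^+ 2 = (l / 2%:R) ^+ 2 + (- th ^+ 2) * rr ^+ 2].
  apply: pigeon => //.
  - by rewrite oppr_eq0 expf_neq0.
  - by rewrite -hSF exprMn xqq // mulrC.
  - by rewrite -hSF exprMn xqq // mulrC.
  - by rewrite -hSF exprAC hl2.
  - by rewrite -hSF frobN // exprAC hthq sqrrN.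
move: hs hrr; rewrite -!hSF => /eqP hs /eqP hrr.
set y := y1 + s * z0.
set w := rr * th - l / 2%:R.
have hyw : y ^+ q * y = w ^+ q * w by rewrite /y hline // heq /w hw.
set u := y * 2%:R.
have hu : u = u1 + (s - hh) * u0.
  by rewrite /u /y /y1 /y0 /z0; field; rewrite h2.
have hMu : Mf q b c u = v.
  rewrite hu MD // Mf_scale ?hMu0 ?mulr0 ?addr0 //.
  by rewrite frobB // hs hhq.
have hLu : Lf q r b c c0 u = l by rewrite /Lf hMu.
have hy : y != 0.
  apply/eqP => hy0; move: hMu; rewrite /u hy0 mul0r /Mf expr0n mulr0 addr0.
  by rewrite -(prednK hq0) /= mulr0 => /esym/eqP; rewrite (negbTE hv).
have hyy : y ^+ q * y != 0 by rewrite mulf_neq0 // expf_neq0.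
have hw0 : w != 0 by apply: contraNneq hyy => hw0; rewrite hyw hw0 mulr0.
set sg := w / y.
have hsg : sg ^+ q.+1 = 1.
  rewrite exprSr /sg expr_div_n.
  have -> : w ^+ q / y ^+ q * (w / y) = (w ^+ q * w) / (y ^+ q * y).
    by field; rewrite hy expf_neq0.
  by rewrite -hyw divff.
have [a [ha haq1]] := E1 hQ hq hsg.
have haq : a ^+ q = sg * a by rewrite xpow // haq1.
exists a, (y / a); split => //; first by rewrite mulf_neq0 // invr_neq0.
rewrite /DD.
have -> : y / a * a *+ 2 = u by rewrite /u -mulr_natr mulfVK.
rewrite hLu expr_div_n haq.
have e1 : a * (y ^+ q / (sg * a)) = w ^+ q.
  have -> : a * (y ^+ q / (sg * a)) = (y ^+ q * y) / w.
    by rewrite /sg; field; rewrite ha hy hw0.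
  by rewrite hyw mulfK.
have e2 : sg * a * (y / a) = w by rewrite /sg; field; rewrite ha hy.
rewrite e1 e2 /w frobB // exprMn hrr hthq hl2.
by field; rewrite h2.
Qed.


Lemma Sol (F : finFieldType) (q e : nat) (hQ : #|F| = (q ^ 2)%N)
  (hq : (1 < q)%N) (he : (0 < e)%N) (t y : F) :
  t ^+ q.+1 = 1 ->
  (gcdn e (q ^ 2 - 1) %| q - 1)%N ->
  (exists w : F, [/\ w != 0, w ^+ e = y & w ^+ (q - 1) = t]) <->
  y ^+ ((q - 1) %/ gcdn e (q ^ 2 - 1)) = t ^+ (e %/ gcdn e (q ^ 2 - 1)).
Proof.
move=> ht hdq.
set d := gcdn e (q ^ 2 - 1) in hdq *.
have hde : (d %| e)%N by apply: dvdn_gcdl.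
have hd0 : (0 < d)%N by rewrite gcdn_gt0 he.
have hqd0 : (0 < (q - 1) %/ d)%N by rewrite divn_gt0 // dvdn_leq //; lia.
have ht0 : t != 0.
  by apply/eqP => ht0; move: ht; rewrite ht0 expr0n /= => /eqP; rewrite eq_sym oner_eq0.
split.
- move=> [w [hw <- <-]].
  rewrite -!exprM !muln_divA // mulnC //.
- move=> hy.
  have hy0 : y != 0.
    apply/eqP => hy0; move: hy; rewrite hy0 expr0n.
    have -> : ((q - 1) %/ d)%N = ((q - 1) %/ d).-1.+1 by lia.
    by move=> /= /esym /eqP; rewrite expf_eq0 (negbTE ht0) andbF.
  have [w0 [hw0 hw0q]] := E1 hQ hq ht.
  set Y := y / w0 ^+ e.
  have hY : Y ^+ ((q - 1) %/ d) = 1.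
    rewrite /Y expr_div_n hy -exprM -hw0q -exprM muln_divA // mulnC -muln_divA //.
    by rewrite divff // expf_neq0.
  have hgcd : gcdn e (q - 1) = d.
    apply/eqP; rewrite eqn_dvd !dvdn_gcd dvdn_gcdl hde hdq /= andbT.
    apply: dvdn_trans (dvdn_gcdr _ _) _.
    by apply/dvdnP; exists q.+1; nia.
  have [g hg] := prim_exists F.
  have [] := @powP F g (q - 1) e Y hg.
  - lia.
  - exact: he.
  - by rewrite hQ; apply/dvdnP; exists q.+1; nia.
  - by rewrite -(divnK hdq) exprM hY expr1n.
  - by rewrite hgcd.
  move=> z [hz1 hze].
  exists (w0 * z); split.
  - rewrite mulf_neq0 //; apply/eqP => z0; move: hz1; rewrite z0 expr0n.
    have -> : (q - 1)%N = (q - 2).+1 by lia.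
    by move=> /= /esym /eqP; rewrite oner_eq0.
  - by rewrite exprMn hze /Y mulrC mulfVK // expf_neq0.
  - by rewrite exprMn hz1 mulr1.
Qed.

Lemma part2gen (F : finFieldType) (q e : nat) (hQ : #|F| = (q ^ 2)%N)
  (hq : (1 < q)%N) (he : (0 < e)%N) (T A B : F) :
  T ^+ q.+1 = 1 ->
  (gcdn e (q ^ 2 - 1) %| q - 1)%N ->
  (forall w : F, w != 0 -> A * w ^+ e = B -> w ^+ (q - 1) != T) <->
  B ^+ ((q - 1) %/ gcdn e (q ^ 2 - 1)) !=
     A ^+ ((q - 1) %/ gcdn e (q ^ 2 - 1)) * T ^+ (e %/ gcdn e (q ^ 2 - 1)).
Proof.
move=> hT hdq.
have hS := fun y => @Sol F q e hQ hq he T y hT hdq.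
set d := gcdn e (q ^ 2 - 1) in hdq hS *.
have hd0 : (0 < d)%N by rewrite gcdn_gt0 he.
have hqd0 : (0 < (q - 1) %/ d)%N by rewrite divn_gt0 // dvdn_leq //; lia.
set n := ((q - 1) %/ d)%N in hS hqd0 *.
set m := (e %/ d)%N in hS *.
have hn0 : forall x : F, x ^+ n = 0 -> x = 0.
  by move=> x /eqP; rewrite expf_eq0 => /andP [_ /eqP].
case: (eqVneq A 0) => hA.
- rewrite hA expr0n -(prednK hqd0) /= mul0r.
  case: (eqVneq B 0) => hB.
  + rewrite hB expr0n /= eqxx; split => // H.
    have [w0 [hw0 hw0q]] := E1 hQ hq hT.
    by have := H w0 hw0; rewrite mul0r hw0q eqxx => /(_ erefl).
  + split => [_|_ w hw]; first by rewrite expf_neq0.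
    by rewrite mul0r => hB0; rewrite -hB0 eqxx in hB.
- have hAn : A ^+ n != 0 by rewrite expf_neq0.
  split.
  + move=> H; apply/negP => /eqP heq.
    have : (B / A) ^+ n = T ^+ m by rewrite expr_div_n heq mulrC mulKf.
    move/hS => [w [hw hwe hwq]].
    by have := H w hw; rewrite hwe mulrC divfK // hwq eqxx => /(_ erefl).
  + move=> hne w hw hAw; apply/negP => /eqP hwq; apply: (negP hne); apply/eqP.
    have : (B / A) ^+ n = T ^+ m.
      by apply/hS; exists w; split => //; rewrite -hAw mulrAC divff // mul1r.
    by rewrite expr_div_n => <-; rewrite mulrC divfK.
Qed.


Lemma ii_of_iii (F : finFieldType) (q r : nat) (hQ : #|F| = (q ^ 2)%N)
  (hq : (1 < q)%N) (hr : (0 < r)%N)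
  (b c c0 : F) (hb : b != 0) (hc : c != 0) (hN : b ^+ q.+1 = c ^+ q.+1) :
  (forall w : F, w != 0 ->
     ((b^-1 * c ^+ q) ^+ r - 1) * w ^+ (r - 1) = b^-1 * c ^+ q * c0 ^+ q - c0 ->
     w ^+ (q - 1) != b ^+ q / c) ->
  (forall w : F, w != 0 -> w ^+ (r - 1) = c0 -> w ^+ (q - 1) != b ^+ q / c).
Proof.
move=> hiii w hw hwc; apply/negP => /eqP hwq.
suff hA : ((b^-1 * c ^+ q) ^+ r - 1) * w ^+ (r - 1) = b^-1 * c ^+ q * c0 ^+ q - c0.
  by move: (hiii w hw hA); rewrite hwq eqxx.
rewrite -(t_eq hb hc hN) in hwq.
set t := b^-1 * c ^+ q in hwq *.
have hwq' : w ^+ q = t * w by rewrite xpow; [rewrite hwq | lia].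
have hc0q : c0 ^+ q = t ^+ (r - 1) * c0 by rewrite -hwc exprAC hwq' exprMn.
rewrite hwc hc0q mulrA -exprS subn1 prednK //; ring.
Qed.

Unset Implicit Arguments. Set Strict Implicit.

Theorem theorem2p5 (p m k : nat) (F : finFieldType)
  (hp : prime p) (hodd : odd p) (hF : #|F| = ((p ^ m) ^ 2)%N)
  (hk0 : (0 < k)%N) (hkm : (k < m)%N)
  (b c c0 : F) (hb : b != 0) (hc : c != 0)
  (hN : normF (p ^ m)%N b = normF (p ^ m)%N c) :
  let q := (p ^ m)%N in
  let condii := forall w : F, w != 0 -> w ^+ (p ^ k - 1)%N = c0 ->
                  w ^+ (q - 1)%N != b ^+ q / c in
  let condiii := forall w : F, w != 0 ->
                  ((b^-1 * c ^+ q) ^+ (p ^ k)%N - 1) * w ^+ (p ^ k - 1)%N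
                    = b^-1 * c ^+ q * c0 ^+ q - c0 ->
                  w ^+ (q - 1)%N != b ^+ q / c in
  (planar (fpoly p m k b c c0) <->
     [/\ (b^-1 * c) ^+ ((q + 1) %/ 2)%N = -1, condii & condiii])
  /\
  (let d := gcdn (p ^ k - 1)%N (q ^ 2 - 1)%N in
   (d %| q - 1)%N ->
   (condii <-> c0 ^+ ((q - 1) %/ d)%N != (b ^+ q / c) ^+ ((p ^ k - 1) %/ d)%N)
   /\
   (condiii <->
      (b^-1 * c ^+ q * c0 ^+ q - c0) ^+ ((q - 1) %/ d)%N
        != ((b^-1 * c ^+ q) ^+ (p ^ k)%N - 1) ^+ ((q - 1) %/ d)%N
           * (b ^+ q / c) ^+ ((p ^ k - 1) %/ d)%N)).
Proof.
move=> q condii condiii.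
have hp1 : (1 < p)%N by apply: prime_gt1.
have hq : (1 < q)%N by rewrite /q -{1}(expn0 p) ltn_exp2l //; lia.
have hqo : odd q by rewrite /q oddX hodd orbT.
set r := (p ^ k)%N.
have hr : (0 < r)%N by rewrite /r expn_gt0 (ltnW hp1).
have hQ : #|F| = (q ^ 2)%N by [].
have hpc : p \in [pchar F].
  by apply: (@card_finPcharP F p (m * 2)) hp; rewrite expnM.
have hnat : forall j, [pchar F].-nat (p ^ j)%N.
  by move=> j; rewrite pnatX (pnatE _ hp) hpc.
have hfq : forall x y : F, (x + y) ^+ q = x ^+ q + y ^+ q.
  by move=> x y; apply: exprDn_pchar; apply: hnat.
have hfr : forall x y : F, (x + y) ^+ r = x ^+ r + y ^+ r.
  by move=> x y; apply: exprDn_pchar; apply: hnat.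
have h2 : (2%:R : F) != 0.
  rewrite -(dvdn_pcharf hpc); apply/negP => /dvdn_leq => /(_ isT) hp2.
  have : p = 2%N by lia.
  by move=> hp2'; rewrite hp2' in hodd.
have hN' : b ^+ q.+1 = c ^+ q.+1 by exact: hN.
have hT : (b ^+ q / c) ^+ q.+1 = 1 by rewrite -(t_eq hb hc hN') (t_q1 hQ hb hc hN').
have he : (0 < r - 1)%N.
  have : (1 < r)%N.
    by rewrite /r -{1}(expn0 p) ltn_exp2l.
  lia.
split.
- change (planar (fF q r b c c0) <-> [/\ (b^-1 * c) ^+ ((q + 1) %/ 2)%N = -1, condii & condiii]).
  rewrite planar_iff //.
  split.
  + move=> hP.
    have hiii : condiii.
      move=> w hw hA; apply/negP => /eqP hwq.
      have [a [x [ha hx hD]]] := nonplanar_notIII hQ hq hqo hr hfq hfr h2 hb hc hN' hw hwq hA.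
      by have := hP a x ha hx; rewrite hD eqxx.
    split => //.
    * case: (eqVneq ((b^-1 * c) ^+ ((q + 1) %/ 2)) (-1)) => // hne.
      have [a [x [ha hx hD]]] := nonplanar_notI hQ hq hqo hr hfq hfr h2 c0 hb hc hN' hne.
      by have := hP a x ha hx; rewrite hD eqxx.
    * exact: (ii_of_iii hQ hq hr hb hc hN' hiii).
  + case => hi _ hiii.
    exact: (planar_dir hQ hq hqo hr hfq hfr h2 hb hc hN' hi hiii).
- move=> d hd; split.
  + have := @part2gen F q (r - 1) hQ hq he (b ^+ q / c) 1 c0 hT hd.
    rewrite expr1n mul1r => <-.
    by split => H w hw hwe; apply: H => //; rewrite ?mul1r // -hwe mul1r.
  + exact: (@part2gen F q (r - 1) hQ hq he (b ^+ q / c) _ _ hT hd).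
Qed.
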